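(* Let $\mathcal H_A,\mathcal H_B$ be finite-dimensional with $d_B=\dim\mathcal H_B$, and let $|\Psi\rangle=\sum_{i=1}^{d_B}\lambda_i|\phi_i^A\rangle\otimes|\xi_i^B\rangle$ be a pure state with full Schmidt rank, i.e. $\{|\phi_i^A\rangle\}$ orthonormal in $\mathcal H_A$, $\{|\xi_i^B\rangle\}$ an orthonormal basis of $\mathcal H_B$, and $\lambda_i\neq 0$ for all $i$. Then the maximal steered coherence of $|\Psi\rangle\langle\Psi|$ attains the largest possible value, namely $\mathcal C(|\Psi\rangle\langle\Psi|)=d_B-1$, the coherence of the maximally coherent state $\frac{1}{\sqrt{d_B}}\sum_{i=1}^{d_B}|\xi_i^B\rangle$.
   Context: For a bipartite state $\rho$ and a POVM element $M$ on $\mathcal H_A$ ($0\le M\le \mathbb 1$) with $p_M:=\mathrm{tr}(M\otimes\mathbb 1\,\rho)>0$, Bob's steered state is $\rho_B^M:=\mathrm{tr}_A(M\otimes\mathbb 1\,\rho)/p_M$. The $\ell_1$-coherence of a state $\sigma$ in an orthonormal basis $\Xi=\{|\xi_i\rangle\}$ is $C(\sigma,\Xi)=\sum_{i\neq j}|\langle\xi_i|\sigma|\xi_j\rangle|$; for a $d_B$-dimensional system it is at most $d_B-1$. The maximal steered coherence is $$\mathcal C(\rho)=\inf_{\Xi}\ \max_{M}\ \frac{1}{p_M}\sum_{i\neq j}\big|\langle\xi_i|\mathrm{tr}_A(M\otimes \mathbb 1\,\rho)|\xi_j\rangle\big|,$$ where the infimum is over all orthonormal eigenbases $\Xi$ of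 $\rho_B=\mathrm{tr}_A\rho$ (unique up to phases when $\rho_B$ is non-degenerate) and the maximum is over POVM elements $M$ on $\mathcal H_A$ with $p_M>0$. *)

(* Defs.v *)
From HB Require Import structures.
From mathcomp Require Import all_boot all_order all_algebra.
From mathcomp Require Import complex mxtens.
From mathcomp Require Import boolp classical_sets reals constructive_ereal.
From mathcomp Require Import ereal.

Set Implicit Arguments.
Unset Strict Implicit.
Unset Printing Implicit Defensive.

Import Order.TTheory GRing.Theory Num.Theory.
Local Open Scope ring_scope.
Local Open Scope classical_set_scope.

Section QDefs.
Variable R : realType.
Local Notation C := (R[i]).

Definition adjmx m n (A : 'M[C]_(m, n)) : 'M[C]_(n, m) := (map_mx Num.conj A)^T.

(* positive semidefinite: <v|M|v> >= 0 for every vector v (in C's order,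
   this means real and nonnegative) *)
Definition psdmx n (M : 'M[C]_n) : Prop :=
  forall v : 'cV[C]_n, 0 <= (adjmx v *m M *m v) 0 0.

Definition povm_elem n (M : 'M[C]_n) : Prop :=
  psdmx M /\ psdmx (1%:M - M).

Definition ptraceA dA dB (X : 'M[C]_(dA * dB)) : 'M[C]_dB :=
  \matrix_(b, b') \sum_(a < dA) X (mxtens_index (a, b)) (mxtens_index (a, b')).

Definition prob_M dA dB (rho : 'M[C]_(dA * dB)) (M : 'M[C]_dA) : C :=
  \tr ((M *t (1%:M : 'M[C]_dB)) *m rho).

Definition steered dA dB (rho : 'M[C]_(dA * dB)) (M : 'M[C]_dA) : 'M[C]_dB :=
  (prob_M rho M)^-1 *: ptraceA ((M *t (1%:M : 'M[C]_dB)) *m rho).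

(* l1-coherence of sigma in the orthonormal basis whose i-th vector xi_i
   has coordinates (Xi i k)_k (the rows of Xi):
   sum_{i <> j} |<xi_i|sigma|xi_j>| *)
Definition l1coh n (sigma Xi : 'M[C]_n) : R :=
  \sum_(i < n) \sum_(j < n | i != j)
     Normc.normc ((map_mx Num.conj Xi *m sigma *m Xi^T) i j).

Definition orth_eigenbasis n (S Xi : 'M[C]_n) : Prop :=
  Xi \is unitarymx /\
  forall i : 'I_n, exists l : C, S *m (row i Xi)^T = l *: (row i Xi)^T.

Definition max_steered_coh dA dB (rho : 'M[C]_(dA * dB)) : \bar R :=
  ereal_inf [set ereal_sup [set (l1coh (steered rho M) Xi)%:E
                           | M in [set M : 'M[C]_dA | povm_elem M /\ 0 < prob_M rho M]]
            | Xi in [set Xi : 'M[C]_dB | orth_eigenbasis (ptraceA rho) Xi]].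

Definition schmidt_state dA dB (lam : 'I_dB -> C) (Phi : 'M[C]_(dB, dA))
    (Xi : 'M[C]_dB) : 'M[C]_(dA * dB, 1 * 1) :=
  \sum_(i < dB) lam i *: ((row i Phi)^T *t (row i Xi)^T).

Definition projector m k (v : 'M[C]_(m, k)) : 'M[C]_m := v *m adjmx v.

End QDefs.

(* Main.v *)
Require Import Defs.
From HB Require Import structures.
From mathcomp Require Import all_boot all_order all_algebra.
From mathcomp Require Import complex mxtens.
From mathcomp Require Import boolp classical_sets reals constructive_ereal.
From mathcomp Require Import ereal.
From mathcomp Require Import spectral ring.

Import Order.TTheory GRing.Theory Num.Theory.
Local Open Scope ring_scope.

Module Aux.
Set Implicit Arguments.
Unset Strict Implicit.
Unset Printing Implicit Defensive.
Section P.
Variable R : realType.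
Local Notation C := (R[i]).

Lemma adjmxD m n (A B : 'M[C]_(m, n)) : adjmx (A + B) = adjmx A + adjmx B.
Proof. by rewrite /adjmx map_mxD linearD. Qed.

Lemma adjmxZ m n (t : C) (A : 'M[C]_(m, n)) : adjmx (t *: A) = t^* *: adjmx A.
Proof. by apply/matrixP => i j; rewrite !mxE rmorphM. Qed.

Lemma adjmxM m n p (A : 'M[C]_(m, n)) (B : 'M[C]_(n, p)) :
  adjmx (A *m B) = adjmx B *m adjmx A.
Proof. by rewrite /adjmx map_mxM trmx_mul. Qed.

Lemma adjmxK m n (A : 'M[C]_(m, n)) : adjmx (adjmx A) = A.
Proof. by apply/matrixP => i j; rewrite !mxE conjCK. Qed.

Definition form n (M : 'M[C]_n) (x y : 'cV[C]_n) : C := (adjmx x *m M *m y) 0 0.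

Lemma form_expand n (M : 'M[C]_n) x y t :
  form M (x + t *: y) (x + t *: y) =
  form M x x + t * form M x y + t^* * form M y x + t^* * t * form M y y.
Proof.
rewrite /form adjmxD adjmxZ !mulmxDl !mulmxDr -!scalemxAl -!scalemxAr !mxE.
ring.
Qed.

Lemma psd_form_ge0 n (M : 'M[C]_n) x : psdmx M -> 0 <= form M x x.
Proof. by move=> /(_ x). Qed.

Lemma real_mid (z a c : C) : 0 <= z -> 0 <= a -> 0 <= c -> (z - a - c)^* = z - a - c.
Proof. by move=> hz ha hc; rewrite !rmorphB /= !geC0_conj. Qed.

Lemma psd_herm n (M : 'M[C]_n) x y : psdmx M -> form M y x = (form M x y)^*.
Proof.
move=> hM.
have ha := psd_form_ge0 x hM; have hc := psd_form_ge0 y hM.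
have h1 := real_mid (psd_form_ge0 (x + 1 *: y) hM) ha hc.
have h2 := real_mid (psd_form_ge0 (x + 'i *: y) hM) ha hc.
rewrite !form_expand in h1 h2.
move: h1 h2.
set a := form M x x; set b := form M x y; set b' := form M y x; set c := form M y y.
have ei : 'i^* = - 'i :> C by rewrite conjCi.
have ii : 'i * 'i + 1 = 0 :> C by rewrite -expr2 sqrCi addNr.
have -> : a + 1 * b + 1^* * b' + 1^* * 1 * c - a - c = b + b'.
  by rewrite conjC1; ring.
have -> : a + 'i * b + 'i^* * b' + 'i^* * 'i * c - a - c = 'i * b - 'i * b'.
  rewrite ei.
  have k2 : forall X Y Z W I : C, X + I*Y + (-I)*Z + (-I)*I*W - X - W = I*Y - I*Z - (I*I+1)*W.
    by move=> *; ring.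
  by rewrite k2 ii mul0r subr0.
rewrite !rmorphD ?rmorphB !rmorphM /= ?rmorphN /= ei => E1 E2.
  rewrite rmorphM /= ei in E2.
have e1 : b^* + b'^* - b - b' = 0 by rewrite -addrA -opprD -E1 subrr.
have e2 : (- 'i * b^* + 'i * b'^*) - ('i * b - 'i * b') = 0.
  by rewrite -E2; ring.
have key : forall X Y Z W I : C, 2%:R * Y - 2%:R * Z =
   (X + Y - Z - W) + (- I) * ((-I * X + I * Y) - (I * Z - I * W)) + (I * I + 1) * (-X + Y - Z + W).
  by move=> *; ring.
have : 2%:R * b'^* - 2%:R * b = 0.
  by rewrite (key b^* _ _ b' 'i) ii mul0r addr0 e1 e2 mulr0 addr0.
move=> /eqP; rewrite subr_eq0 => /eqP /(mulfI _) h.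
have h2 : (2%:R : C) != 0 by rewrite pnatr_eq0.
by rewrite -(h h2) conjCK.
Qed.

Lemma psd_amgm n (M : 'M[C]_n) x y : psdmx M ->
  `|form M x y| *+ 2 <= form M x x + form M y y.
Proof.
move=> hM.
have ha := psd_form_ge0 x hM; have hc := psd_form_ge0 y hM.
have [b0|bn0] := eqVneq (form M x y) 0.
  by rewrite b0 normr0 mul0rn addr_ge0.
have := psd_form_ge0 (x + (- (form M x y)^* / `|form M x y|) *: y) hM.
rewrite form_expand (psd_herm x y hM).
move: bn0 ha hc.
set a := form M x x; set b := form M x y; set c := form M y y => bn0 ha hc.
have nbn0 : `|b| != 0 by rewrite normr_eq0.
have nbc : (`|b|)^* = `|b| by rewrite geC0_conj.
have hbb : b * b^* = `|b| * `|b| by rewrite -expr2 normCK.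
have e1 : - b^* / `|b| * b = - `|b|.
  have -> : - b^* / `|b| * b = - (b * b^*) / `|b| by ring.
  by rewrite hbb mulNr mulfK.
have e2 : (- b^* / `|b|)^* * b^* = - `|b|.
  rewrite rmorphM rmorphN /= fmorphV /= conjCK nbc.
  have -> : - b / `|b| * b^* = - (b * b^*) / `|b| by ring.
  by rewrite hbb mulNr mulfK.
have e3 : (- b^* / `|b|)^* * (- b^* / `|b|) = 1.
  rewrite rmorphM rmorphN /= fmorphV /= conjCK nbc.
  have -> : - b / `|b| * (- b^* / `|b|) = (b * b^*) / (`|b| * `|b|) by field.
  by rewrite hbb divff // mulf_neq0.
rewrite e1 e2 e3 mul1r.
have -> : a + - `|b| + - `|b| + c = (a + c) - `|b| *+ 2 by rewrite mulr2n; ring.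
by rewrite subr_ge0.
Qed.

Lemma psd_CS n (M : 'M[C]_n) x y : psdmx M -> 0 < form M y y ->
  `|form M x y| ^+ 2 <= form M x x * form M y y.
Proof.
move=> hM hc.
have ha := psd_form_ge0 x hM.
have := psd_form_ge0 (x + (- (form M x y)^* / form M y y) *: y) hM.
rewrite form_expand (psd_herm x y hM).
move: hc ha.
set a := form M x x; set b := form M x y; set c := form M y y => hc ha.
have cn0 : c != 0 by rewrite gt_eqF.
have cc : c^* = c by rewrite geC0_conj // ltW.
rewrite rmorphM rmorphN /= fmorphV /= conjCK cc normCK.
have -> : a + - b^* / c * b + - b / c * b^* + - b / c * (- b^* / c) * c
   = a - (b * b^*) / c.
  by field.
rewrite subr_ge0 ler_pdivrMr //.
Qed.

Lemma sum_but (d : nat) (F : 'I_d -> C) i :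
  \sum_(j | i != j) F j = \sum_j F j - F i.
Proof.
rewrite [in RHS](bigD1 i) //= addrC addrK; apply: eq_bigl => j; by rewrite eq_sym.
Qed.

Lemma sum_offdiag_bound d (m : 'I_d -> C) (e : 'I_d -> 'I_d -> C) :
  (forall i j, `|e i j| *+ 2 <= m i + m j) ->
  \sum_i \sum_(j | i != j) `|e i j| <= (d%:R - 1) * \sum_i m i.
Proof.
move=> h.
rewrite -(orFb (_ <= _)) -[false]/(2 == 0)%N -lerMn2r -sumrMnl.
under eq_bigr do rewrite -sumrMnl.
apply: (le_trans (y := \sum_i \sum_(j | i != j) (m i + m j))).
  by apply: ler_sum => i _; apply: ler_sum => j _; exact: h.
under eq_bigr do rewrite sum_but big_split /= sumr_const card_ord.
set P := \sum_i m i.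
rewrite sumrB big_split /= sumrMnl sumr_const card_ord -/P big_split /= -/P.
have key : forall (Q : C) (k : nat), Q *+ k + Q *+ k - (Q + Q) = ((k%:R - 1) * Q) *+ 2.
  by move=> Q k; rewrite mulr2n -[Q *+ k]mulr_natl; ring.
by rewrite key.
Qed.

Lemma sum_tens m n (F : 'I_(m * n) -> C) :
  \sum_k F k = \sum_(a < m) \sum_(b < n) F (mxtens_index (a, b)).
Proof.
rewrite pair_big /= (reindex (@mxtens_index m n)) //=; first by apply: eq_bigr => -[a b].

exists (@mxtens_unindex m n) => k _; [exact: mxtens_indexK | exact: mxtens_unindexK].
Qed.

Section Pure.
Variables (dA dB : nat) (v : 'M[C]_(dA * dB, 1 * 1)) (V : 'M[C]_(dA, dB)).
Hypothesis hv : forall a b k, v (mxtens_index (a, b)) k = V a b.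

Lemma projE a b a' b' :
  projector v (mxtens_index (a, b)) (mxtens_index (a', b')) = V a b * (V a' b')^*.
Proof.
rewrite /projector /adjmx !mxE.
under eq_bigr do rewrite !mxE !hv.
by rewrite sumr_const card_ord.
Qed.

Lemma ptrace_pure (M : 'M[C]_dA) :
  ptraceA ((M *t (1%:M : 'M[C]_dB)) *m projector v) = V^T *m M^T *m map_mx Num.conj V.
Proof.
apply/matrixP => b b'; rewrite /ptraceA !mxE.
apply: eq_bigr => a _.
rewrite mxE sum_tens [X in _ = X * _]mxE mulr_suml; apply: eq_bigr => a'' _.
rewrite (bigD1 b) //= big1 => [|b'' nb]; last first.
  by rewrite tensmxE projE !mxE eq_sym (negbTE nb) mulr0 mul0r.
by rewrite addr0 tensmxE projE !mxE eqxx mulr1; ring.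
Qed.


Lemma ptrace_proj : ptraceA (projector v) = V^T *m map_mx Num.conj V.
Proof.
apply/matrixP => b b'; rewrite /ptraceA !mxE.
by apply: eq_bigr => a _; rewrite projE !mxE.
Qed.

Lemma trace_ptrace (X : 'M[C]_(dA * dB)) : \tr X = \tr (ptraceA X).
Proof.
rewrite /mxtrace sum_tens exchange_big /=; apply: eq_bigr => b _.
by rewrite mxE.
Qed.

End Pure.

Lemma entry_form m n (M : 'M[C]_m) (U : 'M[C]_(m, n)) i j :
  (U^T *m M^T *m map_mx Num.conj U) i j = form M (col j U) (col i U).
Proof.
rewrite /form !mxE.
under eq_bigr do rewrite !mxE big_distrl /=.
under [RHS]eq_bigr do rewrite !mxE big_distrl /=.
rewrite exchange_big /=; apply: eq_bigr => a _; apply: eq_bigr => a' _.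
rewrite !mxE; ring.
Qed.

Lemma unitary_adjK n (Y : 'M[C]_n) : Y \is unitarymx -> adjmx Y *m Y = 1%:M.
Proof.
move=> hY; rewrite -trmxC_unitary in hY.
move/unitarymxP: hY; rewrite trmxCK => <-; by rewrite /adjmx map_trmx.
Qed.

Lemma unitary_K m n (Y : 'M[C]_(m, n)) : Y \is unitarymx -> Y *m adjmx Y = 1%:M.
Proof. by move/unitarymxP => <-; rewrite /adjmx map_trmx. Qed.

Lemma rot_entry m n (M : 'M[C]_m) (V : 'M[C]_(m, n)) (Y : 'M[C]_n) i j :
  (map_mx Num.conj Y *m (V^T *m M^T *m map_mx Num.conj V) *m Y^T) i j =
  form M (col j (V *m adjmx Y)) (col i (V *m adjmx Y)).
Proof.
rewrite -entry_form; congr (_ i j).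
rewrite /adjmx trmx_mul trmxK map_mxM map_trmx /=.
have -> : map_mx Num.conj (map_mx Num.conj Y^T) = Y^T.
  by apply/matrixP => a b; rewrite !mxE /= conjCK.
by rewrite !mulmxA.
Qed.

Lemma rot_trace n (G Y : 'M[C]_n) : Y \is unitarymx ->
  \tr (map_mx Num.conj Y *m G *m Y^T) = \tr G.
Proof.
move=> hY; rewrite mxtrace_mulC mulmxA.
have -> : Y^T *m map_mx Num.conj Y = 1%:M.
  by rewrite -[map_mx _ Y]trmxK -trmx_mul -[(map_mx _ Y)^T]/(adjmx Y) unitary_adjK // trmx1.
by rewrite mul1mx.
Qed.

Lemma normcC (z : C) : (Normc.normc z)%:C%C = `|z|.
Proof. by case: z => a b; rewrite normc_def. Qed.

Lemma l1cohC n (S Y : 'M[C]_n) :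
  (l1coh S Y)%:C%C = \sum_i \sum_(j | i != j) `|(map_mx Num.conj Y *m S *m Y^T) i j|.
Proof.
rewrite /l1coh rmorph_sum; apply: eq_bigr => i _.
by rewrite rmorph_sum; apply: eq_bigr => j _; idtac.
Qed.

Section UB.
Variables (dA dB : nat) (v : 'M[C]_(dA * dB, 1 * 1)) (V : 'M[C]_(dA, dB)).
Hypothesis hv : forall a b k, v (mxtens_index (a, b)) k = V a b.
Variables (Y : 'M[C]_dB).
Hypothesis hY : Y \is unitarymx.

Lemma probE (M : 'M[C]_dA) : prob_M (projector v) M =
  \sum_i form M (col i (V *m adjmx Y)) (col i (V *m adjmx Y)).
Proof.
rewrite /prob_M trace_ptrace (ptrace_pure hv) -(rot_trace _ hY) /mxtrace.
by apply: eq_bigr => i _; rewrite rot_entry.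
Qed.

Lemma steered_entry (M : 'M[C]_dA) i j :
  (map_mx Num.conj Y *m steered (projector v) M *m Y^T) i j =
  (prob_M (projector v) M)^-1 *
    form M (col j (V *m adjmx Y)) (col i (V *m adjmx Y)).
Proof.
by rewrite /steered -scalemxAr -scalemxAl mxE (ptrace_pure hv) rot_entry.
Qed.

Lemma ub_coh (M : 'M[C]_dA) : povm_elem M -> 0 < prob_M (projector v) M ->
  l1coh (steered (projector v) M) Y <= dB%:R - 1.
Proof.
move=> [hM _] hp.
rewrite -lecR l1cohC rmorphB rmorph_nat rmorph1 /=.
under eq_bigr do under eq_bigr do rewrite steered_entry normrM.
set p := prob_M _ _.
have hp' : 0 < p^-1 by rewrite invr_gt0.
rewrite (ger0_norm (ltW hp')).
under eq_bigr do rewrite -mulr_sumr.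
rewrite -mulr_sumr.
apply: (@le_trans _ _ (p^-1 * ((dB%:R - 1) * p))).
  rewrite ler_pM2l // /p probE; apply: sum_offdiag_bound => i j.
  by rewrite addrC; apply: psd_amgm.
by rewrite mulrCA mulVf ?mulr1 // lt0r_neq0.
Qed.

End UB.

Lemma mx11_mul n (A : 'M[C]_(1, 1)) (B : 'M[C]_(1, n)) j : (A *m B) 0 j = A 0 0 * B 0 j.
Proof. by rewrite mxE big_ord1. Qed.

Lemma form_rank1 n (x a b : 'cV[C]_n) :
  form (x *m adjmx x) a b = ((adjmx x *m a) 0 0)^* * (adjmx x *m b) 0 0.
Proof.
rewrite /form mulmxA -[adjmx a *m x *m adjmx x *m b]mulmxA.
have -> : adjmx a *m x = adjmx (adjmx x *m a) by rewrite adjmxM adjmxK.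
by rewrite mx11_mul /adjmx !mxE.
Qed.

Lemma form1E n (z : 'cV[C]_n) : form 1%:M z z = \sum_a `|z a 0| ^+ 2.
Proof.
rewrite /form mulmx1 mxE; apply: eq_bigr => a _.
by rewrite !mxE normCKC.
Qed.

Lemma psd1 n : psdmx (1%:M : 'M[C]_n).
Proof. by move=> z; rewrite -/(form _ z z) form1E sumr_ge0 // => a _; rewrite exprn_ge0. Qed.

Lemma form1_gt0 n (z : 'cV[C]_n) : z != 0 -> 0 < form 1%:M z z.
Proof.
move=> nz; rewrite form1E.
have [a ha] : exists a, z a 0 != 0.
  apply/existsP; apply: contraR nz; rewrite negb_exists => /forallP h.
  by apply/eqP/matrixP => i j; rewrite ord1 mxE; move: (h i); rewrite negbK => /eqP.
rewrite (bigD1 a) //= ltr_pwDl ?sumr_ge0 ?exprn_gt0 ?normr_gt0 // => b _; rewrite exprn_ge0.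
Qed.

Lemma formBl n (M N : 'M[C]_n) a b : form (M - N) a b = form M a b - form N a b.
Proof. rewrite /form mulmxBr mulmxBl. by rewrite !mxE. Qed.

Lemma povm_rank1 n (x : 'cV[C]_n) : form 1%:M x x <= 1 -> povm_elem (x *m adjmx x).
Proof.
move=> hx; split => z; rewrite -/(form _ z z).
  by rewrite form_rank1 mulrC mul_conjC_ge0.
rewrite formBl form_rank1 subr_ge0.
have [x0|nx0] := eqVneq x 0.
  by rewrite x0 /adjmx map_mx0 trmx0 !mul0mx mxE mulr0; apply: psd1.
have -> : ((adjmx x *m z) 0 0)^* * (adjmx x *m z) 0 0 = `|form 1%:M z x| ^+ 2.
  rewrite normCKC (psd_herm _ _ (@psd1 n)) conjCK /form mulmx1.
  by rewrite mulrC.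
apply: (le_trans (psd_CS z (@psd1 n) (form1_gt0 nx0))).
by rewrite ler_piMr // psd1.
Qed.

Section LB.
Variables (dA dB : nat) (v : 'M[C]_(dA * dB, 1 * 1)) (V : 'M[C]_(dA, dB)).
Hypothesis hv : forall a b k, v (mxtens_index (a, b)) k = V a b.
Variables (Y : 'M[C]_dB).
Hypothesis hY : Y \is unitarymx.

Lemma lb_coh (x : 'cV[C]_dA) (c : C) : (0 < dB)%N -> c != 0 -> form 1%:M x x <= 1 ->
  adjmx x *m (V *m adjmx Y) = c *: const_mx 1 ->
  [/\ povm_elem (x *m adjmx x), 0 < prob_M (projector v) (x *m adjmx x) &
  l1coh (steered (projector v) (x *m adjmx x)) Y = dB%:R - 1].
Proof.
move=> d0 c0 hx hU.
have hw k : (adjmx x *m col k (V *m adjmx Y)) 0 0 = c.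
  transitivity ((adjmx x *m (V *m adjmx Y)) 0 k); last by rewrite hU !mxE mulr1.
  by rewrite !mxE; apply: eq_bigr => a _; rewrite !mxE.
have he i j : form (x *m adjmx x) (col j (V *m adjmx Y)) (col i (V *m adjmx Y)) = c^* * c.
  by rewrite form_rank1 !hw.
have q0 : 0 < c^* * c by rewrite -normCKC exprn_gt0 // normr_gt0.
have hp : prob_M (projector v) (x *m adjmx x) = (c^* * c) *+ dB.
  by rewrite (probE hv hY); under eq_bigr do rewrite he; rewrite sumr_const card_ord.
have dn0 : (dB%:R : C) != 0 by rewrite pnatr_eq0 -lt0n.
split; first exact: povm_rank1.
  by rewrite hp pmulrn_lgt0.
apply: (@complexI R); rewrite l1cohC rmorphB rmorph_nat rmorph1 /=.
under eq_bigr do under eq_bigr do rewrite (steered_entry hv Y) he hp.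
have -> : ((c^* * c) *+ dB)^-1 * (c^* * c) = (dB%:R)^-1.
  by rewrite -mulr_natl invfM -mulrA mulVf ?mulr1 // lt0r_neq0.
rewrite ger0_norm ?invr_ge0 ?ler0n //.
under eq_bigr do rewrite sum_but sumr_const card_ord.
rewrite sumr_const card_ord.
have key : forall (Q : C) (k : nat), (Q *+ k - Q) *+ k = (k%:R * (k%:R * Q) - k%:R * Q).
  by move=> Q k; rewrite mulrnBl -!mulrnA -[Q *+ (k * k)]mulr_natl natrM mulr_natl; ring.
rewrite key; field; exact: dn0.
Qed.
End LB.

Lemma schmidtE dA dB (lam : 'I_dB -> C) (Phi : 'M[C]_(dB, dA)) (Xi : 'M[C]_dB) a b k :
  schmidt_state lam Phi Xi (mxtens_index (a, b)) k =
  (Phi^T *m diag_mx (\row_i lam i) *m Xi) a b.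
Proof.
rewrite /schmidt_state summxE mul_mx_diag mxE.
apply: eq_bigr => i _.
by rewrite !mxE mxtens_indexK /=; ring.
Qed.

Lemma mulmx_cancel m n p (A : 'M[C]_(m, n)) (B : 'M[C]_(n, p)) (D : 'M[C]_(p, n)) :
  B *m D = 1%:M -> A *m B *m D = A.
Proof. by move=> h; rewrite -mulmxA h mulmx1. Qed.

Lemma adj_conj m n (A : 'M[C]_(m, n)) : adjmx (map_mx Num.conj A) = A^T.
Proof. by apply/matrixP => i j; rewrite !mxE conjCK. Qed.

Lemma construct dA dB (lam : 'I_dB -> C) (Phi : 'M[C]_(dB, dA)) (Xi Y : 'M[C]_dB) :
  Phi \is unitarymx -> Xi \is unitarymx -> Y \is unitarymx -> (forall i, lam i != 0) ->
  exists x c, [/\ c != 0, form 1%:M x x <= 1 &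
    adjmx x *m ((Phi^T *m diag_mx (\row_i lam i) *m Xi) *m adjmx Y) = c *: const_mx 1].
Proof.
move=> hPhi hXi hY hlam.
pose D := diag_mx (\row_i lam i); pose Di := diag_mx (\row_i (lam i)^-1).
have DiD : Di *m D = 1%:M.
  by rewrite mulmx_diag; apply/matrixP => i j; rewrite !mxE mulVf.
have hP : map_mx Num.conj Phi *m Phi^T = 1%:M.
  have := unitary_K hPhi.
  move/(congr1 (map_mx Num.conj)); rewrite map_mxM map_mx1.
  suff -> : map_mx Num.conj (adjmx Phi) = Phi^T by [].
  by apply/matrixP => i j; rewrite !mxE conjCK.
pose s : 'rV[C]_dB := const_mx 1 *m Y *m adjmx Xi *m Di.
pose S := (s *m adjmx s) 0 0.
have S0 : 0 <= S.
  have := @psd1 dB (adjmx s); rewrite adjmxK mulmx1 //.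
have S1 : 0 < 1 + S by rewrite ltr_pwDl.
pose c := (1 + S)^-1.
have c0 : 0 < c by rewrite invr_gt0.
pose r := c *: s.
exists (adjmx (r *m map_mx Num.conj Phi)), c; split.
- exact: lt0r_neq0.
- rewrite /form adjmxK mulmx1 adjmxM adj_conj !mulmxA (mulmx_cancel _ hP).
  have sc : forall z (A : 'M[C]_1), (z *: A) 0 0 = z * A 0 0 by move=> z A; rewrite mxE.
  rewrite /r adjmxZ -scalemxAl -scalemxAr !sc -/S (geC0_conj (ltW c0)).
  have cS : c * S <= 1.
    by rewrite /c mulrC ler_pdivrMr // mul1r lerDr.
  apply: le_trans (_ : c <= 1).
    by rewrite ler_piMr // ltW.
  by rewrite invf_le1 // lerDl.
- rewrite adjmxK !mulmxA (mulmx_cancel _ hP) /r -!scalemxAl; congr (_ *: _).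
  rewrite /s -/D (mulmx_cancel _ DiD) (mulmx_cancel _ (unitary_adjK hXi)).
  rewrite (mulmx_cancel _ (unitary_K hY)).
  by apply/matrixP => i j; rewrite !mxE.
Qed.

Lemma eig_Xi dA dB (lam : 'I_dB -> C) (Phi : 'M[C]_(dB, dA)) (Xi : 'M[C]_dB) :
  Phi \is unitarymx -> Xi \is unitarymx ->
  orth_eigenbasis ((Phi^T *m diag_mx (\row_i lam i) *m Xi)^T *m
     map_mx Num.conj (Phi^T *m diag_mx (\row_i lam i) *m Xi)) Xi.
Proof.
move=> hPhi hXi; split => // k.
exists (lam k * (lam k)^*).
have hP2 : Phi *m map_mx Num.conj Phi^T = 1%:M.
  by rewrite -map_trmx; apply: unitary_K.
have he : map_mx Num.conj Xi *m (row k Xi)^T = (row k 1%:M)^T.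
  rewrite -[map_mx _ Xi]trmxK -trmx_mul -[(map_mx _ Xi)^T]/(adjmx Xi).
  by rewrite -row_mul unitary_K.
have hd : forall d : 'rV[C]_dB, diag_mx d *m (row k 1%:M)^T = d 0 k *: (row k 1%:M)^T.
  move=> d; apply/matrixP => i j; rewrite mul_diag_mx !mxE.
  by case: (eqVneq k i) => [->|]; rewrite ?mulr1 ?mulr0.
have hx : Xi^T *m (row k 1%:M)^T = (row k Xi)^T.
  by rewrite -trmx_mul -row_mul mul1mx.
rewrite !trmx_mul trmxK tr_diag_mx !map_mxM !mulmxA (mulmx_cancel _ hP2).
rewrite -mulmxA he.
have -> : map_mx Num.conj (diag_mx (\row_i lam i)) = diag_mx (\row_i (lam i)^*).
  by apply/matrixP => i j; rewrite !mxE; case: (i == j); rewrite /= ?rmorph0 ?mulr1n ?mulr0n.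
rewrite -mulmxA hd -scalemxAr -mulmxA hd -scalemxAr hx scalerA !mxE mulrC.
by [].
Qed.
End P.

End Aux.
Import Aux.

Theorem mainTheorem2 (R : realType) (dA dB : nat)
    (lam : 'I_dB -> R[i]) (Phi : 'M[R[i]]_(dB, dA)) (Xi : 'M[R[i]]_dB) :
  Phi \is unitarymx ->
  Xi \is unitarymx ->
  (forall i, lam i != 0) ->
  \sum_(i < dB) Normc.normc (lam i) ^+ 2 = 1 ->
  max_steered_coh (projector (schmidt_state lam Phi Xi)) = ((dB%:R - 1)%:E)%E.
Proof.
move=> hPhi hXi hlam hsum.
have d0 : (0 < dB)%N.
  case: dB lam Phi Xi hPhi hXi hlam hsum => // lam' Phi' Xi' _ _ _.
  by rewrite big_ord0 => /esym/eqP; rewrite oner_eq0.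
pose V := Phi^T *m diag_mx (\row_i lam i) *m Xi.
have hv : forall a b k, schmidt_state lam Phi Xi (mxtens_index (a, b)) k = V a b.
  by move=> a b k; rewrite schmidtE.
have hsup : forall Y : 'M[R[i]]_dB, Y \is unitarymx ->
  ereal_sup [set (l1coh (steered (projector (schmidt_state lam Phi Xi)) M) Y)%:E
     | M in [set M : 'M[R[i]]_dA | povm_elem M /\
          0 < prob_M (projector (schmidt_state lam Phi Xi)) M]] = ((dB%:R - 1)%:E)%E.
  move=> Y hY; apply/eqP; rewrite eq_le; apply/andP; split.
    apply: ge_ereal_sup => _ [M [hM hp] <-].
    by rewrite lee_fin; apply: (ub_coh hv hY).
  have [x [c [c0 hx hU]]] := construct hPhi hXi hY hlam.
  have [h1 h2 h3] := lb_coh hv hY d0 c0 hx hU.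
  apply: ereal_sup_ubound; exists (x *m adjmx x) => //.
  by rewrite h3.
rewrite /max_steered_coh.
set E := (X in ereal_inf X).
have -> : E = [set ((dB%:R - 1)%:E)%E]%classic.
  apply/seteqP; split => z.
    by case=> Y [hY _] <-; rewrite /= hsup.
  move=> /= ->; exists Xi; last exact: hsup.
  by rewrite /= (ptrace_proj hv); apply: eig_Xi.
exact: ereal_inf1.
Qed.
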